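(* Let $f(x)\in\mathbb{F}_{q^n}[x]$ be a scattered polynomial such that $G_f^\circ$ is not isomorphic to $\mathbb{F}_q$. Then $f(x)$ is $\mathrm{GL}$-equivalent to a scattered polynomial $h(x)$ in standard form.
   Context: $q$ is a prime power, $n>1$. A $q$-polynomial $h(x)=\sum_{i=0}^{n-1}b_ix^{q^i}\in\mathbb{F}_{q^n}[x]$ is scattered if for all $y,z\in\mathbb{F}_{q^n}$, $zh(y)-yh(z)=0$ implies $y,z$ are $\mathbb{F}_q$-linearly dependent. $U_h=\{(x,h(x))\colon x\in\mathbb{F}_{q^n}\}$; nonsingular $A\in\mathbb{F}_{q^n}^{2\times2}$ acts by $(x,y)\mapsto(x,y)A$; $G_f=\{A\in\mathrm{GL}(2,q^n)\colon U_fA=U_f\}$ and $G_f^\circ=G_f\cup\{O\}$ ($O$ the zero matrix), which is a field under matrix operations. $f,g$ are $\mathrm{GL}$-equivalent if $U_fA=U_g$ for some $A\in\mathrm{GL}(2,q^n)$. With $\Delta_h=\{(i-j)\bmod n\colon b_ib_j\neq0,\ i\neq j\}\cup\{n\}$ and $t_h=\gcd(\Delta_h)$, $h$ is in standard form if $t_h>1$. *)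

(* Defs.v *)
From HB Require Import structures.
From mathcomp Require Import all_boot all_order all_algebra all_field.
Set Implicit Arguments. Unset Strict Implicit. Unset Printing Implicit Defensive.
Import GRing.Theory.
Local Open Scope ring_scope.

(* The field L plays the role of F_{q^n} (hypothesis #|L| = q^n in the theorem). *)
Section QPoly.
Variable L : finFieldType.
Variables q n : nat.

Definition qpoly_eval (b : 'I_n -> L) (x : L) : L :=
  \sum_(i < n) b i * x ^+ (q ^ i)%N.

Definition in_Fq (a : L) : bool := a ^+ q == a.

Definition Fq_dep (y z : L) : Prop :=
  exists a c : L, [/\ in_Fq a, in_Fq c, (a != 0) || (c != 0) & a * y + c * z = 0].

Definition scattered (b : 'I_n -> L) : Prop :=
  forall y z : L, z * qpoly_eval b y - y * qpoly_eval b z = 0 -> Fq_dep y z.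

Definition Uset (b : 'I_n -> L) : {set 'rV[L]_2} :=
  [set \row_(j < 2) (if j == ord0 then x else qpoly_eval b x) | x : L].

Definition Uact (U : {set 'rV[L]_2}) (A : 'M[L]_2) : {set 'rV[L]_2} :=
  [set u *m A | u in U].

Definition Gset (b : 'I_n -> L) : {set 'M[L]_2} :=
  [set A : 'M[L]_2 | (A \in unitmx) && (Uact (Uset b) A == Uset b)].

Definition Gcirc (b : 'I_n -> L) : {set 'M[L]_2} := 0 |: Gset b.

Definition GL_equiv (f h : 'I_n -> L) : Prop :=
  exists2 A : 'M[L]_2, A \in unitmx & Uact (Uset f) A = Uset h.

Definition Gcirc_iso_Fq (b : 'I_n -> L) : Prop :=
  exists phi : 'M[L]_2 -> L,
    [/\ {in Gcirc b &, forall A B, phi (A + B) = phi A + phi B},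
        {in Gcirc b &, forall A B, phi (A *m B) = phi A * phi B},
        phi 1%:M = 1 /\ {in Gcirc b &, injective phi},
        {in Gcirc b, forall A, in_Fq (phi A)} &
        forall a, in_Fq a -> exists2 A, A \in Gcirc b & phi A = a].

(* t_h = gcd of Delta_h = {(i-j) mod n : b_i b_j <> 0, i <> j} U {n} *)
Definition t_of (b : 'I_n -> L) : nat :=
  \big[gcdn/n]_(i < n) \big[gcdn/0%N]_(j < n | (b i * b j != 0) && (i != j))
     ((i + n - j) %% n)%N.

Definition standard_form (b : 'I_n -> L) : Prop := (1 < t_of b)%N.

End QPoly.

(* Main.v *)
Require Import Defs.
From mathcomp Require Import all_boot all_order all_algebra all_field.
From mathcomp Require Import all_fingroup cyclic ring.
Set Implicit Arguments. Unset Strict Implicit. Unset Printing Implicit Defensive.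
Import GRing.Theory.
Local Open Scope ring_scope.

Lemma det2 (R : comRingType) (M : 'M[R]_2) : \det M = M 0 0 * M 1 1 - M 0 1 * M 1 0.
Proof.
rewrite (expand_det_row _ 0) !big_ord_recl big_ord0 /cofactor !det_mx11 /= !mxE /=.
rewrite expr0 expr1 !mul1r mulN1r mulrN.
rewrite addr0; congr (M _ _ * M _ _ - M _ _ * M _ _); exact: val_inj.
Qed.

Section FD.
Local Open Scope group_scope.
Lemma free_dvd (T : finType) (s : {perm T}) (S : {set T}) :
  (forall x, (s x \in S) = (x \in S)) ->
  (forall i x, x \in S -> (s ^+ i)%g x = x -> (s ^+ i)%g = 1%g) ->
  (#[s]%g %| #|S|)%N.
Proof.
move=> sS fr.
have sSi i x : ((s ^+ i)%g x \in S) = (x \in S).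
  elim: i => [|i IH]; first by rewrite expg0 perm1.
  by rewrite expgSr permM sS IH.
have acts : [acts <[s]>, on S | 'P].
  apply/subsetP => a /cycleP [i ->]; rewrite !inE /=; apply/subsetP => x.
  by rewrite !inE /= apermE sSi.
rewrite -(acts_sum_card_orbit acts); apply: dvdn_sum => _ /imsetP [x xS ->].
have := card_orbit_stab 'P <[s]>%G x.
have -> : #|'C_<[s]>[x | 'P]| = 1%N.
  apply/eqP; rewrite eqn_leq cardG_gt0 andbT.
  rewrite -(cards1 (1%g : {perm T})); apply: subset_leq_card; apply/subsetP => a.
  rewrite !inE sub1set inE /= apermE => /andP [/cycleP [i ->] /eqP ax].
  by rewrite (fr i x xS ax).
by rewrite muln1 => ->.
Qed.
End FD.

Section Main.
Variable L : finFieldType.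
Variables p k q n : nat.
Hypothesis hp : prime p.
Hypothesis hk : (0 < k)%N.
Hypothesis hq : q = (p ^ k)%N.
Hypothesis hn : (1 < n)%N.
Hypothesis hL : #|L| = (q ^ n)%N.

Local Notation fr m x := (x ^+ (q ^ m)%N).

Lemma pcharL : p \in [pchar L].
Proof. by apply: (card_finPcharP (n := (k * n)%N)) => //; rewrite hL hq expnM. Qed.

Lemma q_gt1 : (1 < q)%N.
Proof. by rewrite hq -[1%N](expn0 p) ltn_exp2l ?prime_gt1. Qed.

Lemma q_gt0 : (0 < q)%N.
Proof. exact: ltnW q_gt1. Qed.

Lemma n_gt0 : (0 < n)%N.
Proof. exact: ltnW hn. Qed.

Lemma frD m (x y : L) : fr m (x + y) = fr m x + fr m y.
Proof.
apply: exprDn_pchar.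
by rewrite (eq_pnat _ (pcharf_eq pcharL)) hq -expnM pnatX pnat_id.
Qed.

Lemma fr0 m : fr m (0 : L) = 0.
Proof. by rewrite expr0n expn_eq0 (negbTE (lt0n_neq0 q_gt0)). Qed.

Lemma frN m (x : L) : fr m (- x) = - fr m x.
Proof. by apply/eqP; rewrite -subr_eq0 opprK -frD addNr fr0. Qed.

Lemma frB m (x y : L) : fr m (x - y) = fr m x - fr m y.
Proof. by rewrite frD frN. Qed.

Lemma frM m (x y : L) : fr m (x * y) = fr m x * fr m y.
Proof. exact: exprMn. Qed.

Lemma fr_add m1 m2 (x : L) : fr (m1 + m2) x = fr m2 (fr m1 x).
Proof. by rewrite expnD exprM. Qed.

Lemma fr_zero (x : L) : fr 0 x = x.
Proof. by rewrite expn0 expr1. Qed.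

Lemma fr_n (x : L) : fr n x = x.
Proof. by rewrite -hL expf_card. Qed.

Lemma fr_mul s (x : L) : fr (s * n) x = x.
Proof. by elim: s => [|s IH]; rewrite ?mul0n ?fr_zero // mulSn fr_add fr_n IH. Qed.

Lemma fr_mod m (x : L) : fr m x = fr (m %% n) x.
Proof. by rewrite {1}(divn_eq m n) fr_add fr_mul. Qed.

Lemma inFq_fr (a : L) m : in_Fq q a -> fr m a = a.
Proof.
move/eqP=> ha; elim: m => [|m IH]; first by rewrite fr_zero.
by rewrite -addn1 fr_add IH expn1.
Qed.

Lemma inFqE (a : L) : in_Fq q a = (fr 1 a == a).
Proof. by rewrite expn1. Qed.

Lemma inFq0 : in_Fq q (0 : L).
Proof. by rewrite inFqE fr0. Qed.
Lemma inFq1 : in_Fq q (1 : L).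
Proof. by rewrite /in_Fq expr1n. Qed.
Lemma inFqD (a b : L) : in_Fq q a -> in_Fq q b -> in_Fq q (a + b).
Proof. by rewrite !inFqE frD => /eqP -> /eqP ->. Qed.
Lemma inFqN (a : L) : in_Fq q a -> in_Fq q (- a).
Proof. by rewrite !inFqE frN => /eqP ->. Qed.
Lemma inFqM (a b : L) : in_Fq q a -> in_Fq q b -> in_Fq q (a * b).
Proof. by rewrite !inFqE frM => /eqP -> /eqP ->. Qed.
Lemma inFqV (a : L) : in_Fq q a -> in_Fq q (a^-1).
Proof. by rewrite !inFqE exprVn => /eqP ->. Qed.

Local Notation qp b := (qpoly_eval q b).

Lemma qpD (b : 'I_n -> L) x y : qp b (x + y) = qp b x + qp b y.
Proof. by rewrite /qpoly_eval -big_split /=; apply: eq_bigr => i _; rewrite frD mulrDr. Qed.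
Lemma qp0 (b : 'I_n -> L) : qp b 0 = 0.
Proof. by rewrite /qpoly_eval big1 // => i _; rewrite fr0 mulr0. Qed.
Lemma qpN (b : 'I_n -> L) x : qp b (- x) = - qp b x.
Proof. by apply/eqP; rewrite -subr_eq0 opprK -qpD addNr qp0. Qed.
Lemma qpB (b : 'I_n -> L) x y : qp b (x - y) = qp b x - qp b y.
Proof. by rewrite qpD qpN. Qed.
Lemma qpZ (b : 'I_n -> L) a x : in_Fq q a -> qp b (a * x) = a * qp b x.
Proof.
move=> ha; rewrite /qpoly_eval mulr_sumr; apply: eq_bigr => i _.
by rewrite frM inFq_fr // mulrCA.
Qed.

Definition rv (x y : L) : 'rV[L]_2 := \row_(j < 2) (if j == ord0 then x else y).
Definition u (b : 'I_n -> L) x := rv x (qp b x).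

Lemma rv0 x y : rv x y 0 0 = x.
Proof. by rewrite mxE. Qed.
Lemma rv1 x y : rv x y 0 1 = y.
Proof. by rewrite mxE. Qed.

Lemma rv_inj x y x' y' : rv x y = rv x' y' -> x = x' /\ y = y'.
Proof. by move=> e; split; [rewrite -(rv0 x y) e rv0 | rewrite -(rv1 x y) e rv1]. Qed.

Lemma rv_mul x y (M : 'M[L]_2) :
  rv x y *m M = rv (x * M 0 0 + y * M 1 0) (x * M 0 1 + y * M 1 1).
Proof.
apply/rowP => j; rewrite !mxE !big_ord_recl big_ord0 !mxE /= addr0.
by case: j => [[|[|]]] //= Hj; congr (_ * M _ _ + _ * M _ _); apply: val_inj.
Qed.

Lemma rvB x y x' y' : rv x y - rv x' y' = rv (x - x') (y - y').
Proof. by apply/rowP => j; rewrite !mxE; case: ifP. Qed.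
Lemma rvZ a x y : a *: rv x y = rv (a * x) (a * y).
Proof. by apply/rowP => j; rewrite !mxE; case: ifP. Qed.
Lemma rv00 : rv 0 0 = 0.
Proof. by apply/rowP => j; rewrite !mxE; case: ifP. Qed.

Lemma uB b x y : u b x - u b y = u b (x - y).
Proof. by rewrite /u rvB qpB. Qed.
Lemma u0 b : u b 0 = 0.
Proof. by rewrite /u qp0 rv00. Qed.

Lemma memU b v : reflect (exists x, v = u b x) (v \in Uset q b).
Proof.
apply: (iffP imsetP) => [[x _ ->]|[x ->]]; first by exists x.
by exists x.
Qed.

Lemma memUact (U : {set 'rV[L]_2}) M v :
  reflect (exists2 w, w \in U & v = w *m M) (v \in Uact U M).
Proof. exact: imsetP. Qed.


Lemma qn_pos i : (i < n)%N -> (q ^ i < q ^ n)%N.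
Proof. by move=> hi; rewrite ltn_exp2l // q_gt1. Qed.

Lemma qcoef0 (c : 'I_n -> L) :
  (forall x, \sum_(i < n) c i * fr i x = 0) -> forall i, c i = 0.
Proof.
move=> hc.
pose P : {poly L} := \poly_(m < q ^ n) (\sum_(i < n) if (q ^ i == m)%N then c i else 0).
have hP x : P.[x] = \sum_(i < n) c i * fr i x.
  rewrite horner_poly.
  under eq_bigr => m _ do rewrite mulr_suml.
  rewrite exchange_big /=; apply: eq_bigr => i _.
  rewrite (bigD1 (Ordinal (qn_pos (ltn_ord i)))) //= eqxx big1 ?addr0 // => m hm.
  case: eqP => // e; first by move: hm; rewrite -val_eqE /= e eqxx.
  by rewrite mul0r.
have P0 : P = 0.
  apply/eqP; apply: contraT => nz.
  have := max_poly_roots nz (rs := enum L).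
  rewrite enum_uniq -cardE hL => /(_ _ isT); rewrite ltnNge size_poly /=.
  move=> H; suff : false by []; apply: H.
  by apply/allP => x _; rewrite /root hP hc.
move=> i; have := congr1 (fun P : {poly L} => P`_(q ^ i)) P0.
rewrite coef_poly qn_pos // coef0 => <-.
rewrite -big_mkcond /=.
rewrite (eq_bigl (fun j => j == i)) ?big_pred1_eq // => j.
by rewrite eqn_exp2l ?q_gt1.
Qed.


Definition mx2 (r1 r2 : 'rV[L]_2) : 'M[L]_2 :=
  \matrix_(i < 2, j < 2) if i == 0 then r1 0 j else r2 0 j.

Lemma mx2_mul r1 r2 (M : 'M[L]_2) : mx2 r1 r2 *m M = mx2 (r1 *m M) (r2 *m M).
Proof.
apply/matrixP => i j; rewrite !mxE; case: ifP => hi; rewrite ?mxE;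
  by apply: eq_bigr => l _; rewrite /mx2 mxE hi.
Qed.

Lemma det_rv a b c d : \det (mx2 (rv a b) (rv c d)) = a * d - b * c.
Proof. by rewrite det2 !mxE /=. Qed.

Lemma mx2_0 : mx2 0 0 = 0.
Proof. by apply/matrixP => i j; rewrite !mxE; case: ifP. Qed.

Lemma unit_det (M : 'M[L]_2) : (M \in unitmx) = (\det M != 0).
Proof. by rewrite unitmxE unitfE. Qed.

Lemma uZ b a x : in_Fq q a -> u b (a * x) = a *: u b x.
Proof. by move=> ha; rewrite /u rvZ qpZ. Qed.

Lemma qpN_u b x : u b (x - - (0 : L)) = u b x.
Proof. by rewrite oppr0 subr0. Qed.

Lemma uN b x : - u b x = u b (- x).
Proof. by rewrite -[LHS]add0r -(u0 b) uB add0r. Qed.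

Lemma uD b x y : u b x + u b y = u b (x + y).
Proof. by rewrite -[u b y]opprK uN uB opprK. Qed.

Lemma scat_tr (f h : 'I_n -> L) (M : 'M[L]_2) : M \in unitmx ->
  (forall y, exists x, u h y = u f x *m M) -> scattered q f -> scattered q h.
Proof.
move=> uM hyx sf y z e.
have [x1 e1] := hyx y; have [x2 e2] := hyx z.
have d0 : \det (mx2 (u h y) (u h z)) = 0.
  rewrite /u det_rv -[RHS]oppr0 -e; ring.
move: d0; rewrite e1 e2 -mx2_mul det_mulmx => /eqP; rewrite mulf_eq0.
have dM : \det M != 0 by rewrite -unit_det.
rewrite (negbTE dM) orbF /u det_rv => /eqP d0.
have [a [c [ha hc nz e3]]] : Fq_dep q x1 x2.
  by apply: sf; rewrite -[RHS]oppr0 -d0; ring.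
exists a, c; split => //.
have : a *: u f x1 + c *: u f x2 = 0.
  by rewrite -!uZ // uD e3 u0.
move/(congr1 (fun v => (v *m M) 0 0)).
rewrite mulmxDl -!scalemxAl -e1 -e2 mul0mx !mxE /=.
done.
Qed.

Lemma GL_of (f h : 'I_n -> L) (M : 'M[L]_2) : M \in unitmx ->
  (forall x, exists y, u f x *m M = u h y) ->
  (forall y, exists x, u h y = u f x *m M) -> GL_equiv q f h.
Proof.
move=> uM h1 h2; exists M => //; apply/setP => v.
apply/memUact/memU => [[w /memU [x ->] ->]|[y ->]].
  by have [y ->] := h1 x; exists y.
by have [x ->] := h2 y; exists (u f x) => //; apply/memU; exists x.
Qed.

Lemma GL_fwd (f h : 'I_n -> L) : GL_equiv q f h -> exists2 M, M \in unitmx &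
  (forall x, exists y, u f x *m M = u h y) /\ (forall y, exists x, u h y = u f x *m M).
Proof.
case=> M uM e; exists M => //; split.
  move=> x; have : u f x *m M \in Uact (Uset q f) M.
    by apply/memUact; exists (u f x) => //; apply/memU; exists x.
  by rewrite e => /memU [y ->]; exists y.
move=> y; have : u h y \in Uact (Uset q f) M by rewrite e; apply/memU; exists y.
by case/memUact => w /memU [x ->] ->; exists x.
Qed.

Lemma scat_equiv (f h : 'I_n -> L) : GL_equiv q f h -> scattered q f -> scattered q h.
Proof. by case/GL_fwd => M uM [_ H]; apply: scat_tr uM H. Qed.

Lemma GL_trans (f g h : 'I_n -> L) : GL_equiv q f g -> GL_equiv q g h -> GL_equiv q f h.
Proof.
case/GL_fwd => M uM [a1 a2]; case/GL_fwd => N uN [b1 b2].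
apply: (@GL_of _ _ (M *m N)); first by rewrite unitmx_mul uM.
  by move=> x; have [y e] := a1 x; have [z e'] := b1 y; exists z; rewrite mulmxA e e'.
by move=> z; have [y e] := b2 z; have [x e'] := a2 y; exists x; rewrite mulmxA -e' e.
Qed.


Lemma card_Fq : (#|[set a : L | in_Fq q a]| <= q)%N.
Proof.
pose P : {poly L} := 'X^q - 'X.
have sP : size P = q.+1.
  rewrite /P size_polyDl ?size_polyXn // size_polyN size_polyX ltnS; exact: q_gt1.
have nz : P != 0 by rewrite -size_poly_eq0 sP.
have := max_poly_roots nz (rs := enum [set a : L | in_Fq q a]).
rewrite enum_uniq -cardE sP ltnS; apply => //.
apply/allP => x; rewrite mem_enum inE /root /P !hornerE => /eqP ->.
by rewrite subrr.
Qed.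

Lemma card_dep (S : {set L}) :
  (forall a b, a \in S -> b \in S -> Fq_dep q a b) -> (#|S| <= q)%N.
Proof.
move=> hS.
case: (pickP (fun s => (s \in S) && (s != 0))) => [s0 /andP [s0S s0nz]|none].
  apply: leq_trans card_Fq.
  apply: leq_trans (leq_imset_card (fun mu => mu * s0) _).
  apply: subset_leq_card; apply/subsetP => s sS.
  have [a [c [ha hc nz e]]] := hS _ _ s0S sS.
  have cnz : c != 0.
    apply: contraTneq nz => c0; move: e; rewrite c0 mul0r addr0 => /eqP.
    by rewrite mulf_eq0 (negbTE s0nz) orbF => /eqP ->; rewrite eqxx.
  apply/imsetP; exists (- (a / c)); first by rewrite inE inFqN // inFqM // inFqV.
  move/eqP: e; rewrite addr_eq0 => /eqP e.
  have e' : c * s = - (a * s0) by rewrite e opprK.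
  by apply: (mulfI cnz); rewrite e'; field.
apply: leq_trans (ltnW q_gt1).
apply/card_le1_eqP => x y xS yS.
have := none x; have := none y; rewrite xS yS /= => /negbFE/eqP -> /negbFE/eqP ->.
done.
Qed.

Definition stab (f : 'I_n -> L) (B : 'M[L]_2) := forall x, exists x', u f x *m B = u f x'.

Lemma stab1 f : stab f 1%:M.
Proof. by move=> x; exists x; rewrite mulmx1. Qed.
Lemma stabB f B C : stab f B -> stab f C -> stab f (B - C).
Proof.
move=> hB hC x; have [y ey] := hB x; have [z ez] := hC x.
by exists (y - z); rewrite mulmxBr ey ez uB.
Qed.
Lemma stabM f B C : stab f B -> stab f C -> stab f (B *m C).
Proof.
move=> hB hC x; have [y ey] := hB x; have [z ez] := hC y.
by exists z; rewrite mulmxA ey ez.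
Qed.
Lemma stabX f B i : stab f B -> stab f (B ^+ i).
Proof.
move=> hB; elim: i => [|i IH]; first by rewrite expr0; apply: stab1.
by rewrite exprS; apply: stabM.
Qed.
Lemma stabS f a : in_Fq q a -> stab f a%:M.
Proof. by move=> ha x; exists (a * x); rewrite mul_mx_scalar uZ. Qed.

Lemma stab_first f B x : stab f B -> u f x *m B = u f ((u f x *m B) 0 0).
Proof. by move=> hB; have [y ->] := hB x; rewrite /u rv0. Qed.

Lemma NS (f : 'I_n -> L) (B : 'M[L]_2) : (2 < n)%N -> scattered q f -> stab f B ->
  \det B = 0 -> B = 0.
Proof.
move=> n3 sf hB dB; apply/eqP; apply: contraT => Bnz.
pose g x := (u f x *m B) 0 0.
have eg x : u f x *m B = u f (g x) by apply: stab_first.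
have gB x y : g (x - y) = g x - g y.
  by rewrite /g -uB mulmxBl !mxE.
pose Im := [set g x | x in L]; pose Ker := [set x | g x == 0].
have cIm : (#|Im| <= q)%N.
  apply: card_dep => _ _ /imsetP [x1 _ ->] /imsetP [x2 _ ->].
  apply: sf; have := congr1 determinant (mx2_mul (u f x1) (u f x2) B).
  rewrite det_mulmx dB mulr0 !eg /u det_rv => /eqP; rewrite eq_sym => /eqP e.
  by rewrite -[RHS]oppr0 -e; ring.
have cKer : (#|Ker| <= q)%N.
  apply: card_dep => x1 x2; rewrite !inE => /eqP g1 /eqP g2.
  apply: sf.
  have : mx2 (u f x1) (u f x2) *m B = 0 by rewrite mx2_mul !eg g1 g2 u0 mx2_0.
  case: (boolP (\det (mx2 (u f x1) (u f x2)) == 0)) => [|dnz e].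
    by rewrite /u det_rv => /eqP e _; rewrite -[RHS]oppr0 -e; ring.
  have hU : mx2 (u f x1) (u f x2) \in unitmx by rewrite unit_det.
  have := mulKmx hU B; rewrite e mulmx0 => eB.
  by rewrite -eB eqxx in Bnz.
pose s y := odflt 0 [pick z | g z == y].
have gs x : g (s (g x)) = g x.
  rewrite /s; case: pickP => [z /eqP //|/(_ x)]; by rewrite eqxx.
pose F x := (g x, x - s (g x)).
have Finj : injective F.
  move=> x y [e1 e2]; move: e2; rewrite e1 => /eqP; rewrite subr_eq subrK => /eqP //.
have : (#|L| <= #|Im| * #|Ker|)%N.
  rewrite -cardsX -(card_imset (mem L) Finj). 
  apply: subset_leq_card; apply/subsetP => _ /imsetP [x _ ->].
  rewrite !inE /=; apply/andP; split; [exact: imset_f | by rewrite gB gs subrr].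
move/leq_trans => /(_ _ (leq_mul cIm cKer)).
rewrite hL mulnn leq_exp2l ?q_gt1 // leqNgt n3 //.
Qed.


Lemma Apow (f : 'I_n -> L) (A : 'M[L]_2) : (2 < n)%N -> scattered q f -> stab f A ->
  A \in unitmx -> A ^+ #|L| = A.
Proof.
move=> n3 sf hA uA.
pose phi x := (u f x *m A) 0 0.
have ephi x : u f x *m A = u f (phi x) by apply: stab_first.
have phinj : injective phi.
  move=> x y e; have := congr1 (mulmx^~ (invmx A)) (congr1 (u f) e).
  by rewrite -!ephi !mulmxK // => /rv_inj [].
pose s := perm phinj.
have it i x : u f x *m A ^+ i = u f ((s ^+ i)%g x).
  elim: i x => [|i IH] x; first by rewrite expr0 mulmx1 expg0 perm1.
  by rewrite exprSr -[_ * A]/(mulmx _ A) mulmxA IH expgSr permM permE ephi.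
have unz x : x != 0 -> u f x != 0.
  by move=> xnz; apply: contraNneq xnz => e; rewrite -(rv0 x (qp f x)) -/(u f x) e mxE.
have A1 i x : x != 0 -> u f x *m A ^+ i = u f x -> A ^+ i = 1.
  move=> xnz e; apply/eqP; rewrite -subr_eq0; apply/eqP.
  apply: (NS n3 sf); first by apply: stabB; [apply: stabX | apply: stab1].
  apply/eqP/det0P; exists (u f x); first exact: unz.
  by rewrite mulmxBr e mulmx1 subrr.
have phi0 : phi 0 = 0 by rewrite /phi u0 mul0mx mxE.
have dv : (#[s]%g %| #|[set~ (0 : L)%R]|)%N.
  apply: free_dvd.
    by move=> x; rewrite !in_setC1 permE -{1}phi0 (inj_eq phinj).
  move=> i x; rewrite in_setC1 => xnz ex.
  have Ai : A ^+ i = 1 by apply: (A1 i x) => //; rewrite it ex.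
  apply/permP => y; rewrite perm1.
  by have := it i y; rewrite Ai mulmx1 => /rv_inj [].
move: dv; rewrite order_dvdn cardsC1 => /eqP sm.
have Am : A ^+ #|L|.-1 = 1.
  by apply: (A1 _ 1); rewrite ?oner_eq0 // it sm perm1.
have cL : #|L| = (#|L|.-1).+1 by rewrite prednK // hL expn_gt0 q_gt0.
by rewrite cL exprSr Am mul1r.
Qed.

Lemma eigen (A : 'M[L]_2) : A ^+ #|L| = A -> exists lam : L, \det (A - lam%:M) = 0.
Proof.
move=> eA.
have : horner_mx A ('X^#|L| - 'X) = 0.
  by rewrite rmorphB /= rmorphXn /= horner_mx_X eA subrr.
rewrite finField_genPoly rmorph_prod /=.
move/(congr1 determinant).
rewrite (big_morph _ (@detM _ 1) (@det1 _ 2)) det0.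
move/eqP/prodf_eq0 => [lam _ /eqP e].
exists lam; rewrite -e rmorphB /= horner_mx_X horner_mx_C //.
Qed.


Definition i0 : 'I_n := Ordinal n_gt0.

Lemma sum_if0 (c : L) x : \sum_(i < n) (if i == i0 then c else 0) * fr i x = c * x.
Proof.
rewrite (bigD1 i0) //= ?eqxx fr_zero big1 ?addr0 // => i /negbTE ->.
by rewrite mul0r.
Qed.

Lemma sum_ifk (m : 'I_n) (c : L) x :
  \sum_(i < n) (if (m == i) then c else 0) * fr i x = c * fr m x.
Proof.
rewrite (bigD1 m) //= ?eqxx big1 ?addr0 // => i hi.
by rewrite eq_sym (negbTE hi) mul0r.
Qed.

Lemma fr_sum m (I : Type) (r : seq I) (F : I -> L) :
  fr m (\sum_(i <- r) F i) = \sum_(i <- r) fr m (F i).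
Proof. exact: (big_morph _ (frD m) (fr0 m)). Qed.

Definition isq (g : L -> L) := exists b : 'I_n -> L, forall x, g x = qp b x.

Lemma isq_id : isq id.
Proof.
exists (fun i => if i == i0 then 1 else 0) => x.
by rewrite /qpoly_eval sum_if0 mul1r.
Qed.

Lemma isq_lin (b : 'I_n -> L) (al be : L) : isq (fun z => al * z + be * qp b z).
Proof.
exists (fun i => be * b i + (if i == i0 then al else 0)) => x.
rewrite /qpoly_eval; symmetry; under eq_bigr => i _ do rewrite mulrDl.
rewrite big_split /= sum_if0 mulr_sumr addrC; congr (_ + _).
by apply: eq_bigr => i _; rewrite mulrA.
Qed.

Lemma isq_comp g1 g2 : isq g1 -> isq g2 -> isq (g1 \o g2).
Proof.
move=> [b eb] [c ec].
exists (fun m : 'I_n => \sum_(i < n) \sum_(j < n)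
   (if (Ordinal (ltn_pmod (i + j) n_gt0) == m) then b i * fr i (c j) else 0)) => x.
rewrite /= eb ec /qpoly_eval; symmetry.
under eq_bigr => m _ do rewrite mulr_suml.
rewrite exchange_big /=; apply: eq_bigr => i _.
under eq_bigr => m _ do rewrite mulr_suml.
rewrite exchange_big /= fr_sum mulr_sumr; apply: eq_bigr => j _.
rewrite sum_ifk /= frM -fr_add -fr_mod addnC mulrA //.
Qed.

Lemma isq_iter g i : isq g -> isq (iter i g).
Proof.
move=> hg; elim: i => [|i IH] /=; first exact: isq_id.
have [b eb] := isq_comp hg IH; by exists b.
Qed.

Lemma isq_inv g (ginj : injective g) : isq g ->
  exists2 gi, isq gi & cancel g gi /\ cancel gi g.
Proof.
move=> hg; pose s := perm ginj.
have : (s^-1)%g \in <[s]>%g by rewrite groupV cycle_id.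
case/cycleP => i ei.
exists (fun y => (s^-1)%g y).
  have [b eb] := isq_iter i hg; exists b => x; rewrite ei permX -eb.
  by apply: eq_iter => y; rewrite permE.
split => x /=; first by rewrite -(permE ginj x) permK.
by rewrite -(permE ginj) permKV.
Qed.


Lemma t_dvd_n (b : 'I_n -> L) : (t_of b %| n)%N.
Proof.
rewrite /t_of; apply: (big_rec (fun x => x %| n)%N) => // i x _ hx.
exact: dvdn_trans (dvdn_gcdr _ _) hx.
Qed.

Lemma t_dvd (b : 'I_n -> L) r : (r %| n)%N ->
  (forall i j : 'I_n, b i * b j != 0 -> i != j -> (r %| (i + n - j) %% n)%N) ->
  (r %| t_of b)%N.
Proof.
move=> rn hij; rewrite /t_of.
apply: (big_ind (fun x => r %| x)%N) => //.
  by move=> x y hx hy; rewrite dvdn_gcd hx hy.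
move=> i _; apply: (big_ind (fun x => r %| x)%N) => //.
  by move=> x y hx hy; rewrite dvdn_gcd hx hy.
by move=> j /andP [h1 h2]; apply: hij.
Qed.

Lemma std_of (b : 'I_n -> L) r : (1 < r)%N -> (r %| n)%N ->
  (forall i j : 'I_n, b i * b j != 0 -> i != j -> (r %| (i + n - j) %% n)%N) ->
  standard_form b.
Proof.
move=> r1 rn hij; rewrite /standard_form.
have rt := t_dvd rn hij.
have tpos : (0 < t_of b)%N.
  by case: (posnP (t_of b)) => // e; have := t_dvd_n b; rewrite e dvd0n => /eqP n0; move: n_gt0; rewrite n0.
exact: leq_trans r1 (dvdn_leq tpos rt).
Qed.

Lemma fr_mulr s r (a : L) : fr r a = a -> fr (s * r) a = a.
Proof.
move=> ha; elim: s => [|s IH]; rewrite ?mul0n ?fr_zero // mulSn fr_add ha IH //.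
Qed.

Lemma fix_r (a : L) : ~~ in_Fq q a -> exists r, [/\ (1 < r)%N, (r %| n)%N &
  forall m, fr m a = a -> (r %| m)%N].
Proof.
move=> na.
have ex : exists m, (0 < m)%N && (fr m a == a) by exists n; rewrite n_gt0 fr_n eqxx.
case: (ex_minnP ex) => r /andP [r0 /eqP ra] rmin.
have dv m : fr m a = a -> (r %| m)%N.
  move=> ma; rewrite /dvdn; apply/eqP; apply: contraNeq (negbT (ltnn r)) => nz.
  have := ltn_pmod m r0.
  suff: (r <= m %% r)%N by move=> h1 h2; exact: leq_ltn_trans h1 h2.
  apply: rmin; rewrite lt0n nz /=.
  move: ma; rewrite {1}(divn_eq m r) fr_add fr_mulr // => ->; done.
exists r; split => //; last by apply: dv; apply: fr_n.
rewrite ltn_neqAle eq_sym r0 andbT; apply: contra na => /eqP r1.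
by rewrite inFqE -r1 ra.
Qed.

Lemma dep_scal (z lam : L) : z != 0 -> Fq_dep q z (lam * z) -> in_Fq q lam.
Proof.
move=> znz [a [c [ha hc nz e]]].
have e1 : (a + c * lam) * z = 0 by rewrite mulrDl -mulrA.
move/eqP: e1; rewrite mulf_eq0 (negbTE znz) orbF addr_eq0 => /eqP e2.
have cnz : c != 0.
  apply: contraTneq nz => c0; move: e2; rewrite c0 mul0r oppr0 => ->.
  by rewrite eqxx.
have -> : lam = - (a / c) by rewrite e2; field.
by rewrite inFqN // inFqM // inFqV.
Qed.

Lemma Uact_eq (f h : 'I_n -> L) (M : 'M[L]_2) :
  (forall x, exists y, u f x *m M = u h y) ->
  (forall y, exists x, u h y = u f x *m M) -> Uact (Uset q f) M = Uset q h.
Proof.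
move=> h1 h2; apply/setP => v.
apply/memUact/memU => [[w /memU [x ->] ->]|[y ->]].
  by have [y ->] := h1 x; exists y.
by have [x ->] := h2 y; exists (u f x) => //; apply/memU; exists x.
Qed.

Lemma scalar_iso (f : 'I_n -> L) :
  (forall A, A \in Gset q f -> exists2 mu, in_Fq q mu & A = mu%:M) ->
  Gcirc_iso_Fq q f.
Proof.
move=> hs.
have gc A : A \in Gcirc q f -> exists2 mu, in_Fq q mu & A = mu%:M.
  rewrite /Gcirc in_setU1 => /orP [/eqP ->|/hs //].
  by exists 0; rewrite ?inFq0 //; apply/matrixP => i j; rewrite !mxE mul0rn.
exists (fun A => A 0 0); split.
- by move=> A B _ _; rewrite mxE.
- move=> A B /gc [mu _ ->] /gc [nu _ ->].
  by rewrite -scalar_mxM !mxE /= mulr1n.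
- split; first by rewrite mxE.
  move=> A B /gc [mu _ ->] /gc [nu _ ->]; rewrite !mxE /= !mulr1n => ->. done.
- by move=> A /gc [mu hmu ->]; rewrite mxE /= mulr1n.
move=> a ha; case: (eqVneq a 0) => [->|anz].
  exists 0; first by rewrite /Gcirc in_setU1 eqxx.
  by rewrite mxE.
exists a%:M; last by rewrite mxE /= mulr1n.
rewrite /Gcirc in_setU1; apply/orP; right.
rewrite /Gset inE; apply/andP; split.
  by rewrite unit_det det_scalar expf_neq0.
apply/eqP; apply: Uact_eq.
  by move=> x; exists (a * x); rewrite mul_mx_scalar uZ.
move=> y; exists (a^-1 * y); rewrite mul_mx_scalar -uZ //.
by rewrite mulrA divff // mul1r.
Qed.


Definition zero0 (b : 'I_n -> L) : 'I_n -> L := fun i => if i == i0 then 0 else b i.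

Lemma qp_zero0 b y : qp (zero0 b) y = qp b y - b i0 * y.
Proof.
rewrite /qpoly_eval -sum_if0 -sumrB; apply: eq_bigr => i _; rewrite /zero0.
by case: eqP => [->|_]; rewrite ?mul0r ?subrr ?subr0.
Qed.

Lemma rv_eta (v : 'rV[L]_2) : v = rv (v 0 0) (v 0 1).
Proof.
apply/rowP => j; rewrite mxE.
by case: j => [[|[|]]] //= Hj; congr (v _ _); apply: val_inj.
Qed.

Lemma mx2E0 r1 r2 j : mx2 r1 r2 0 j = r1 0 j.
Proof. by rewrite mxE. Qed.
Lemma mx2E1 r1 r2 j : mx2 r1 r2 1 j = r2 0 j.
Proof. by rewrite mxE. Qed.

Lemma GL_zero0 b : GL_equiv q b (zero0 b).
Proof.
pose T := mx2 (rv 1 (- b i0)) (rv 0 1).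
have eT x : u b x *m T = u (zero0 b) x.
  rewrite /u rv_mul !mx2E0 !mx2E1 !rv0 !rv1 qp_zero0.
  by congr rv; ring.
apply: (@GL_of _ _ T).
- by rewrite unit_det det_rv mulr1 mulr0 subr0 oner_neq0.
- by move=> x; exists x.
- by move=> y; exists y.
Qed.


Lemma main3 (f : 'I_n -> L) (A : 'M[L]_2) : (2 < n)%N -> scattered q f ->
  A \in Gset q f -> ~ (exists2 mu, in_Fq q mu & A = mu%:M) ->
  exists h : 'I_n -> L, [/\ scattered q h, standard_form h & GL_equiv q f h].
Proof.
move=> n3 sf AG nsc.
move: AG; rewrite inE => /andP [uA /eqP eU].
have hA : stab f A.
  move=> x; have : u f x *m A \in Uact (Uset q f) A.
    by apply/memUact; exists (u f x) => //; apply/memU; exists x.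
  by rewrite eU => /memU [y ->]; exists y.
pose phi x := (u f x *m A) 0 0.
have ephi x : u f x *m A = u f (phi x) by apply: stab_first.
have [lam dl] := eigen (Apow n3 sf hA uA).
move: dl => /eqP /det0P [v vnz vA0].
have vA : v *m A = lam *: v.
  by move: vA0; rewrite mulmxBr mul_mx_scalar => /eqP; rewrite subr_eq0 => /eqP.
have lnq : ~~ in_Fq q lam.
  apply/negP => hl; apply: nsc; exists lam => //; apply/eqP; rewrite -subr_eq0; apply/eqP.
  apply: (NS n3 sf); first by apply: stabB => //; apply: stabS.
  by apply/eqP/det0P; exists v.
move: (rv_eta v) => ev; move: (v 0 0) (v 0 1) ev => a0 a1 ev; subst v.
pose w := if a0 != 0 then rv 0 1 else rv 1 0.
pose Q := mx2 w (rv a0 a1).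
have uQ : Q \in unitmx.
  rewrite unit_det /Q /w; case: ifP => h0; rewrite det_rv.
    by rewrite mul0r mul1r sub0r oppr_eq0.
  rewrite mul1r mul0r subr0; apply: contra vnz => /eqP a10.
  by move/negbFE/eqP: h0 => a00; rewrite a00 a10 rv00.
pose P := invmx Q.
have QP : Q *m P = 1%:M by apply: mulmxV.
have PQ : P *m Q = 1%:M by apply: mulVmx.
have uP : P \in unitmx by rewrite unitmx_inv.
pose psi x := (u f x *m P) 0 0.
have psiE x : psi x = P 0 0 * x + P 1 0 * qp f x.
  by rewrite /psi /u rv_mul rv0 mulrC (mulrC (qp f x)).
have row1Q : rv 0 1 *m Q = rv a0 a1.
  by rewrite rv_mul !mx2E0 !mx2E1 !rv0 !rv1 !mul0r !mul1r !add0r.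
have psinj : injective psi.
  move=> x y e; apply/eqP; rewrite -subr_eq0; apply/negP => /negP znz.
  have pz : (u f (x - y) *m P) 0 0 = 0.
    move: e; rewrite /psi -uB mulmxBl; set X := u f x *m P; set Y := u f y *m P.
    by rewrite !mxE => ->; rewrite subrr.
  set z := x - y in znz pz.
  set t := (u f z *m P) 0 1.
  have e1 : u f z *m P = rv 0 t by rewrite {1}(rv_eta (u f z *m P)) pz.
  have e2 : u f z = t *: rv a0 a1.
    rewrite -[u f z]mulmx1 -PQ mulmxA e1 -row1Q scalemxAl rvZ mulr0 mulr1 //.
  have e3 : u f z *m A = lam *: u f z.
    by rewrite e2 -scalemxAl vA scalerA mulrC -scalerA.
  rewrite ephi {2}/u rvZ in e3; case/rv_inj: e3 => p1 p2.
  apply/negP: lnq; apply/negPn; apply: (dep_scal znz); apply: sf.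
  by rewrite -p1 p2 p1; ring.
have ipsi : isq psi.
  by have [b eb] := isq_lin f (P 0 0) (P 1 0); exists b => x; rewrite psiE eb.
have [psi_i hpi [c1 c2]] := isq_inv psinj ipsi.
have [hb ehb] : isq (fun y => (u f (psi_i y) *m P) 0 1).
  have [b eb] := isq_comp (isq_lin f (P 0 1) (P 1 1)) hpi.
  exists b => y; rewrite -eb /= /u rv_mul rv1 mulrC (mulrC (qp f _)) //.
have uPsi x : u f x *m P = u hb (psi x).
  by rewrite {1}(rv_eta (u f x *m P)) /u -ehb c1.
have GLh : GL_equiv q f hb.
  apply: (GL_of uP) => [x|y]; first by exists (psi x).
  by exists (psi_i y); rewrite uPsi c2.
pose A' := Q *m A *m P.
have row1 : rv 0 1 *m A' = rv 0 lam.
  rewrite /A' !mulmxA row1Q vA -scalemxAl -row1Q -mulmxA QP mulmx1 rvZ mulr0 mulr1 //.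
have [A10 A11] : A' 1 0 = 0 /\ A' 1 1 = lam.
  by move: row1; rewrite rv_mul !mul0r !add0r !mul1r => /rv_inj.
have key y : qp hb (A' 0 0 * y) = A' 0 1 * y + lam * qp hb y.
  have : u hb y *m A' = u hb (psi (phi (psi_i y))).
    rewrite -{1}(c2 y) -uPsi /A' !mulmxA -(mulmxA _ P Q) PQ mulmx1 ephi uPsi //.
  rewrite {1}/u rv_mul A10 A11 => /rv_inj [e1 e2].
  rewrite mulr0 addr0 in e1.
  by rewrite mulrC e1 -e2; ring.
set a' := A' 0 0 in key; set b' := A' 0 1 in key.
have H : forall y, \sum_(j < n)
    (hb j * fr j a' - lam * hb j - (if j == i0 then b' else 0)) * fr j y = 0.
  move=> y; under eq_bigr => j _ do rewrite !mulrBl.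
  rewrite !sumrB sum_if0.
  have eA : \sum_(j < n) hb j * fr j a' * fr j y = qp hb (a' * y).
    by rewrite /qpoly_eval; apply: eq_bigr => j _; rewrite frM mulrA.
  have eB : \sum_(j < n) lam * hb j * fr j y = lam * qp hb y.
    by rewrite /qpoly_eval mulr_sumr; apply: eq_bigr => j _; rewrite mulrA.
  by rewrite eA eB key; ring.
have coef i : i != i0 -> hb i * (fr i a' - lam) = 0.
  move=> ni; have := qcoef0 H i.
  by rewrite (negbTE ni) subr0 mulrBr => <-; rewrite (mulrC lam).
pose h' := zero0 hb.
have GLh' : GL_equiv q f h' := GL_trans GLh (GL_zero0 hb).
have sh' : scattered q h' := scat_equiv GLh' sf.
have h'0 i : h' i != 0 -> i != i0 /\ fr i a' = lam.
  rewrite /h' /zero0; case: (eqVneq i i0) => [->|ni']; first by rewrite eqxx.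
  move=> hnz.
  split => //; have := coef i ni'.
  move/eqP; rewrite mulf_eq0 (negbTE hnz) /= subr_eq0 => /eqP //.
have a'nq : ~~ in_Fq q a'.
  apply/negP => ha.
  have h'z y : qp h' y = 0.
    rewrite /qpoly_eval big1 // => i _.
    case: (eqVneq (h' i) 0) => [->|/h'0 [_ e]]; first by rewrite mul0r.
    by move: lnq; rewrite -e inFq_fr // ha.
  move/negP: lnq; apply; apply: (@dep_scal 1); first exact: oner_neq0.
  apply: sh'; rewrite !h'z. by rewrite !mulr0 subrr.
have [r [r1 rn hr]] := fix_r a'nq.
exists h'; split => //.
apply: (std_of r1 rn) => i j hij ne.
have [hi hj] : h' i != 0 /\ h' j != 0 by move: hij; rewrite mulf_eq0 negb_or => /andP.
have [_ ei] := h'0 i hi; have [_ ej] := h'0 j hj.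
have jn : (j <= n)%N by exact: ltnW (ltn_ord j).
apply: hr; rewrite -fr_mod -addnBA // fr_add ei -ej -fr_add subnKC // fr_n //.
Qed.


Lemma final (f : 'I_n -> L) : scattered q f -> ~ Gcirc_iso_Fq q f ->
  exists h : 'I_n -> L, [/\ scattered q h, standard_form h & GL_equiv q f h].
Proof.
move=> sf niso.
case: (boolP [exists A in Gset q f, ~~ [exists mu : L, in_Fq q mu && (A == mu%:M)]]).
  case/exists_inP => A AG /existsPn nsc.
  case: (ltnP 2 n) => [n3|n2].
    apply: (main3 n3 sf AG) => -[mu hmu eA].
    by have := nsc mu; rewrite hmu eA eqxx.
  have n2' : n = 2 by apply/eqP; rewrite eqn_leq n2 hn.
  exists (zero0 f); split; [exact: scat_equiv (GL_zero0 f) sf | | exact: GL_zero0].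
  apply: (@std_of _ 2) => //; first by rewrite n2'.
  move=> i j hij ne; exfalso.
  have : (i == i0) || (j == i0).
    have hi : (i < 2)%N := leq_trans (ltn_ord i) (eq_leq n2').
    have hj : (j < 2)%N := leq_trans (ltn_ord j) (eq_leq n2').
    move: ne; rewrite -!val_eqE /=.
    by case: (nat_of_ord i) hi => [|[|]] //; case: (nat_of_ord j) hj => [|[|]].
  by case/orP => /eqP e; move: hij; rewrite /zero0 e eqxx ?mul0r ?mulr0 eqxx.
move/exists_inPn => H; exfalso; apply: niso; apply: scalar_iso => A AG.
have := H A AG; rewrite negbK => /existsP [mu /andP [hmu /eqP ->]].
by exists mu.
Qed.

End Main.

Theorem corollary4p7 (L : finFieldType) (p k q n : nat)
  (hp : prime p) (hk : (0 < k)%N) (hq : q = (p ^ k)%N) (hn : (1 < n)%N)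
  (hL : #|L| = (q ^ n)%N)
  (f : 'I_n -> L) :
  scattered q f -> ~ Gcirc_iso_Fq q f ->
  exists h : 'I_n -> L, [/\ scattered q h, standard_form h & GL_equiv q f h].
Proof.
exact: (final hp hk hq hn hL).
Qed.
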